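(* Work in a second-order (Bayes linear) belief framework with prevision $P(\cdot)$ and $\mathrm{Var}$, $\mathrm{Cov}$ derived from it, and for random vectors $Y,W$ let $P_W(Y)=P(Y)+\mathrm{Cov}(Y,W)\mathrm{Var}(W)^{\dagger}(W-P(W))$ be the adjusted expectation ($\dagger$ = Moore–Penrose inverse). Let $Z_{ij}=\mu_i+\mathcal R_{ij}$ ($i=1,\dots,m$, $j=1,\dots,n_i$) be random vectors where each $\mathcal R_{ij}$ has $P(\mathcal R_{ij})=0$, is uncorrelated with every $\mu_k$, distinct residuals are mutually uncorrelated, and $\mathrm{Var}(\mathcal R_{ij})$ does not depend on $j$. Let $\boldsymbol\mu=\mathrm{vec}(\mu_1,\dots,\mu_m)$ and suppose the quantity of interest satisfies $X=\boldsymbol{\mathcal A}\boldsymbol\mu+\boldsymbol U$, with $\boldsymbol{\mathcal A}$ a known matrix and $\boldsymbol U$ uncorrelated with all $\mu_i$ and $\mathcal R_{ij}$. Let $\overline Z_i=\frac1{n_i}\sum_{j=1}^{n_i}Z_{ij}$, $\overline{\boldsymbol Z}=(\overline Z_1,\dots,\overline Z_m)$ and $\mathcal Z=P_{\overline{\boldsymbol Z}}(\boldsymbol\mu)$. Then $P_{\mathcal Z}(X)\to\boldsymbol{\mathcal A}\boldsymbol\mu+P(\boldsymbol U)$ as $n_i\to\infty$ for all $i$.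
   Context: Convergence is in the second-order (Bayes linear) sense, i.e. in the norm $\|Y\|^2=P(Y^\intercal Y)$; in particular $\overline Z_i\to\mu_i$ in this sense as $n_i\to\infty$. *)

(* Defs.v *)
From HB Require Import structures.
From mathcomp Require Import all_boot all_order all_algebra.
From mathcomp Require Import boolp classical_sets reals.
Set Implicit Arguments. Unset Strict Implicit. Unset Printing Implicit Defensive.
Import Order.TTheory GRing.Theory Num.Theory.
Local Open Scope ring_scope.

(* A second-order (Bayes linear) belief structure: random quantities form a
   real vector space V containing the constant 1 ("bl_one"), and
   pe X Y = P(XY) is the prevision of products, a symmetric positive
   semidefinite bilinear form with P(1*1) = 1. *)
Record belief (R : realType) (V : lmodType R) := Belief {
  pe : V -> V -> R;
  bl_one : V;
  pe_linear : forall (a : R) (x y z : V), pe (a *: x + y) z = a * pe x z + pe y z;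
  pe_sym : forall x y, pe x y = pe y x;
  pe_ge0 : forall x, 0 <= pe x x;
  pe_unit : pe bl_one bl_one = 1 }.

Section BayesLinear.
Variables (R : realType) (V : lmodType R) (B : belief V).

Definition bl_prev (x : V) : R := pe B x (bl_one B).
Definition bl_cov (x y : V) : R := pe B x y - bl_prev x * bl_prev y.

Definition covm k l (Y : 'I_k -> V) (W : 'I_l -> V) : 'M[R]_(k, l) :=
  \matrix_(i, j) bl_cov (Y i) (W j).
Definition varm k (W : 'I_k -> V) : 'M[R]_k := covm W W.

Definition is_mpinv k l (M : 'M[R]_(k, l)) (N : 'M[R]_(l, k)) : Prop :=
  [/\ M *m N *m M = M, N *m M *m N = N,
      (M *m N)^T = M *m N & (N *m M)^T = N *m M].
Definition mpinv k l (M : 'M[R]_(k, l)) : 'M[R]_(l, k) :=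
  xget 0 [set N | is_mpinv M N].

Definition adj_exp k l (W : 'I_l -> V) (Y : 'I_k -> V) : 'I_k -> V :=
  fun i => bl_prev (Y i) *: bl_one B +
    \sum_(j < l) (covm Y W *m mpinv (varm W)) i j *: (W j - bl_prev (W j) *: bl_one B).

Definition bl_norm k (Y : 'I_k -> V) : R := Num.sqrt (\sum_(i < k) pe B (Y i) (Y i)).

End BayesLinear.

(* Main.v *)
Require Import Defs.
From HB Require Import structures.
From mathcomp Require Import all_boot all_order all_algebra.
From mathcomp Require Import boolp classical_sets reals.
From mathcomp Require Import ring lra.
Import Order.TTheory GRing.Theory Num.Theory.
Local Open Scope ring_scope.

Section MP.
Variable R : realType.

Lemma gram_unit r n (G : 'M[R]_(r, n)) : row_free G -> G *m G^T \in unitmx.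
Proof.
move=> fG; rewrite -row_free_unit; apply: inj_row_free => v H.
have vG0 : v *m G = 0.
  apply/rowP => j; rewrite [RHS]mxE.
  have : ((v *m G) *m (v *m G)^T) 0 0 = 0.
    by rewrite trmx_mul mulmxA -(mulmxA v) H mul0mx mxE.
  rewrite mxE => /psumr_eq0P h.
  have h0 : forall i : 'I_n, true -> 0 <= (v *m G) 0 i * (v *m G)^T i 0.
    by move=> i _; rewrite !mxE -expr2 sqr_ge0.
  have := h h0 j isT; rewrite [_^T _ _]mxE => /eqP.
  by rewrite mulf_eq0 orbb => /eqP.
apply: (row_free_inj fG); by rewrite vG0 mul0mx.
Qed.

Lemma mp_fact k l r (F : 'M[R]_(k, r)) (G : 'M[R]_(r, l)) :
  F^T *m F \in unitmx -> G *m G^T \in unitmx ->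
  is_mpinv (F *m G) (G^T *m invmx (G *m G^T) *m invmx (F^T *m F) *m F^T).
Proof.
move=> Fu Gu.
set P := invmx (F^T *m F); set Q := invmx (G *m G^T).
have PF : P *m (F^T *m F) = 1%:M by rewrite mulVmx.
have GQ : (G *m G^T) *m Q = 1%:M by rewrite mulmxV.
have QG : Q *m (G *m G^T) = 1%:M by rewrite mulVmx.
have PT : P^T = P by rewrite /P trmx_inv trmx_mul trmxK.
have QT : Q^T = Q by rewrite /Q trmx_inv trmx_mul trmxK.
have hMN : (F *m G) *m (G^T *m Q *m P *m F^T) = F *m P *m F^T.
  by rewrite !mulmxA -(mulmxA F G) -(mulmxA F _ Q) GQ mulmx1.
have hNM : (G^T *m Q *m P *m F^T) *m (F *m G) = G^T *m Q *m G.
  by rewrite !mulmxA -(mulmxA _ F^T F) -(mulmxA _ P) PF mulmx1.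
split.
- by rewrite hMN !mulmxA -(mulmxA _ F^T F) -(mulmxA F P) PF mulmx1.
- rewrite hNM !mulmxA -(mulmxA _ G G^T) -(mulmxA _ Q) -(mulmxA G^T Q) QG mulmx1.
  by rewrite !mulmxA.
- have sym : (F *m P *m F^T)^T = F *m P *m F^T by rewrite !trmx_mul trmxK PT mulmxA.
  exact: (etrans (congr1 trmx hMN) (etrans sym (esym hMN))).
- have sym : (G^T *m Q *m G)^T = G^T *m Q *m G by rewrite !trmx_mul trmxK QT mulmxA.
  exact: (etrans (congr1 trmx hNM) (etrans sym (esym hNM))).
Qed.

Lemma mp_exists k l (M : 'M[R]_(k, l)) : exists N, is_mpinv M N.
Proof.
have fF : row_free (col_base M)^T by rewrite /row_free mxrank_tr; exact: col_base_full.
have Fu : (col_base M)^T *m col_base M \in unitmx by have := gram_unit _ _ _ fF; rewrite trmxK.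
have Gu := gram_unit _ _ _ (row_base_free M).
rewrite -{1}(mulmx_base M); eexists; exact: mp_fact.
Qed.

Lemma mpinvP k l (M : 'M[R]_(k, l)) : is_mpinv M (mpinv M).
Proof. by rewrite /mpinv; apply: (@xgetPex _ 0 [set N | is_mpinv M N]); exact: mp_exists. Qed.

End MP.
Arguments mpinvP {R k l}.

Section LinF.
Variables (R : realType) (V : lmodType R) (f : V -> R).
Hypothesis hf : forall a x y, f (a *: x + y) = a * f x + f y.
Lemma lf0 : f 0 = 0.
Proof. have := hf 1 0 0; rewrite scaler0 addr0 mul1r => h; lra. Qed.
Lemma lfD x y : f (x + y) = f x + f y.
Proof. by rewrite -[x]scale1r hf mul1r scale1r. Qed.
Lemma lfZ a x : f (a *: x) = a * f x.
Proof. by rewrite -[a *: x]addr0 hf lf0 addr0. Qed.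
Lemma lfN x : f (- x) = - f x.
Proof. by rewrite -scaleN1r lfZ mulN1r. Qed.
Lemma lfB x y : f (x - y) = f x - f y.
Proof. by rewrite lfD lfN. Qed.
Lemma lf_sum I (r : seq I) (P : pred I) (F : I -> V) :
  f (\sum_(i <- r | P i) F i) = \sum_(i <- r | P i) f (F i).
Proof. exact: (big_morph f lfD lf0). Qed.
End LinF.

Section BL.
Context {R : realType} {V : lmodType R} (B : belief V).
Local Notation pe := (pe B).
Local Notation one := (bl_one B).
Local Notation prev := (bl_prev B).
Local Notation cov := (bl_cov B).

Let pl1 z : forall a x y, pe (a *: x + y) z = a * pe x z + pe y z.
Proof. by move=> a x y; rewrite pe_linear. Qed.
Let pl2 z : forall a x y, pe z (a *: x + y) = a * pe z x + pe z y.
Proof. by move=> a x y; rewrite pe_sym pe_linear !(pe_sym _ z). Qed.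
Lemma peDl x y z : pe (x + y) z = pe x z + pe y z. Proof. exact: lfD (pl1 z) _ _. Qed.
Lemma peDr x y z : pe z (x + y) = pe z x + pe z y. Proof. exact: lfD (pl2 z) _ _. Qed.
Lemma peBl x y z : pe (x - y) z = pe x z - pe y z. Proof. exact: lfB (pl1 z) _ _. Qed.
Lemma peBr x y z : pe z (x - y) = pe z x - pe z y. Proof. exact: lfB (pl2 z) _ _. Qed.
Lemma peNl x z : pe (- x) z = - pe x z. Proof. exact: lfN (pl1 z) _. Qed.
Lemma peNr x z : pe z (- x) = - pe z x. Proof. exact: lfN (pl2 z) _. Qed.
Lemma peZl a x z : pe (a *: x) z = a * pe x z. Proof. exact: lfZ (pl1 z) _ _. Qed.
Lemma peZr a x z : pe z (a *: x) = a * pe z x. Proof. exact: lfZ (pl2 z) _ _. Qed.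
Lemma pe0l z : pe 0 z = 0. Proof. exact: lf0 (pl1 z). Qed.
Lemma pe0r z : pe z 0 = 0. Proof. exact: lf0 (pl2 z). Qed.
Lemma pe_suml I (r : seq I) (P : pred I) (F : I -> V) z :
  pe (\sum_(i <- r | P i) F i) z = \sum_(i <- r | P i) pe (F i) z.
Proof. exact: lf_sum (pl1 z) _ _ _ _. Qed.
Lemma pe_sumr I (r : seq I) (P : pred I) (F : I -> V) z :
  pe z (\sum_(i <- r | P i) F i) = \sum_(i <- r | P i) pe z (F i).
Proof. exact: lf_sum (pl2 z) _ _ _ _. Qed.

Lemma prev_one : prev one = 1. Proof. exact: pe_unit. Qed.
Lemma prevD x y : prev (x + y) = prev x + prev y. Proof. exact: peDl. Qed.
Lemma prevB x y : prev (x - y) = prev x - prev y. Proof. exact: peBl. Qed.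
Lemma prevZ a x : prev (a *: x) = a * prev x. Proof. exact: peZl. Qed.
Lemma prev_sum I (r : seq I) (P : pred I) (F : I -> V) :
  prev (\sum_(i <- r | P i) F i) = \sum_(i <- r | P i) prev (F i).
Proof. exact: pe_suml. Qed.

Let cl1 z : forall a x y, cov (a *: x + y) z = a * cov x z + cov y z.
Proof. by move=> a x y; rewrite /bl_cov prevD prevZ peDl peZl; ring. Qed.
Let cl2 z : forall a x y, cov z (a *: x + y) = a * cov z x + cov z y.
Proof. by move=> a x y; rewrite /bl_cov prevD prevZ peDr peZr; ring. Qed.
Lemma covDl x y z : cov (x + y) z = cov x z + cov y z. Proof. exact: lfD (cl1 z) _ _. Qed.
Lemma covDr x y z : cov z (x + y) = cov z x + cov z y. Proof. exact: lfD (cl2 z) _ _. Qed.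
Lemma covBl x y z : cov (x - y) z = cov x z - cov y z. Proof. exact: lfB (cl1 z) _ _. Qed.
Lemma covBr x y z : cov z (x - y) = cov z x - cov z y. Proof. exact: lfB (cl2 z) _ _. Qed.
Lemma covZl a x z : cov (a *: x) z = a * cov x z. Proof. exact: lfZ (cl1 z) _ _. Qed.
Lemma covZr a x z : cov z (a *: x) = a * cov z x. Proof. exact: lfZ (cl2 z) _ _. Qed.
Lemma cov_suml I (r : seq I) (P : pred I) (F : I -> V) z :
  cov (\sum_(i <- r | P i) F i) z = \sum_(i <- r | P i) cov (F i) z.
Proof. exact: lf_sum (cl1 z) _ _ _ _. Qed.
Lemma cov_sumr I (r : seq I) (P : pred I) (F : I -> V) z :
  cov z (\sum_(i <- r | P i) F i) = \sum_(i <- r | P i) cov z (F i).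
Proof. exact: lf_sum (cl2 z) _ _ _ _. Qed.
Lemma cov_sym x y : cov x y = cov y x.
Proof. by rewrite /bl_cov pe_sym mulrC. Qed.
Lemma cov_oner x : cov x one = 0.
Proof. by rewrite /bl_cov prev_one mulr1 /bl_prev subrr. Qed.
Lemma cov_onel x : cov one x = 0.
Proof. by rewrite cov_sym cov_oner. Qed.
Lemma peE x y : pe x y = cov x y + prev x * prev y.
Proof. by rewrite /bl_cov subrK. Qed.
Lemma cov_ge0 x : 0 <= cov x x.
Proof.
have -> : cov x x = pe (x - prev x *: one) (x - prev x *: one).
  rewrite peBl !peBr !peZl !peZr pe_unit /bl_cov /bl_prev (pe_sym B one x); ring.
exact: pe_ge0.
Qed.

Lemma cov_cs y w : cov w w = 0 -> cov y w = 0.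
Proof.
move=> w0; apply/eqP; apply/negPn/negP => c0.
have := cov_ge0 (y + (- (cov y y + 1) / (2 * cov y w)) *: w).
rewrite !covDl !covDr !covZl !covZr w0 (cov_sym w y).
set c := cov y w; set a := cov y y.
have -> : a + (- (a + 1) / (2 * c)) * c + ((- (a + 1) / (2 * c)) * c + (- (a + 1) / (2 * c)) * ((- (a + 1) / (2 * c)) * 0)) = -1.
  by field.
move=> h; lra.
Qed.

Definition inspan {l} (W : 'I_l -> V) x :=
  exists c0 (c : 'I_l -> R), x = c0 *: one + \sum_j c j *: W j.

Section Adj.
Variables (k l : nat) (W : 'I_l -> V) (Y : 'I_k -> V).
Local Notation C := (covm B Y W).
Local Notation M := (varm B W).
Local Notation N := (mpinv M).

Lemma CNM : C *m N *m M = C.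
Proof.
have [MNM _ _ _] := mpinvP M.
set T := 1%:M - N *m M.
have MT : M *m T = 0 by rewrite mulmxBr mulmx1 mulmxA MNM subrr.
have CT : C *m T = 0.
  apply/matrixP => i j; rewrite mxE [RHS]mxE.
  set w := \sum_l0 T l0 j *: W l0.
  have ww : cov w w = 0.
    rewrite /w cov_suml big1 // => l0 _; rewrite covZl cov_sumr.
    have h : \sum_l1 cov (W l0) (T l1 j *: W l1) = 0.
      have h0 : (M *m T) l0 j = 0 by rewrite MT mxE.
      rewrite mxE in h0; rewrite -[RHS]h0; apply: eq_bigr => l1 _.
      by rewrite covZr mulrC /varm /covm; congr (_ * _); rewrite mxE.
    by rewrite h mulr0.
  have h1 := cov_cs (Y i) w ww; rewrite -[RHS]h1 /w cov_sumr.
  by apply: eq_bigr => l0 _; rewrite covZr mulrC; congr (_ * _); rewrite mxE.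
by move: CT; rewrite mulmxBr mulmx1 mulmxA => /eqP; rewrite subr_eq0 => /eqP <-.
Qed.

Lemma adj_prev i : prev (adj_exp B W Y i) = prev (Y i).
Proof.
rewrite /adj_exp prevD prevZ prev_one mulr1 prev_sum big1 ?addr0 // => j _.
by rewrite prevZ prevB prevZ prev_one mulr1 subrr mulr0.
Qed.

Lemma adj_cov i j : cov (adj_exp B W Y i) (W j) = cov (Y i) (W j).
Proof.
rewrite /adj_exp covDl covZl cov_onel mulr0 add0r cov_suml.
transitivity ((C *m N *m M) i j); last by rewrite CNM mxE.
rewrite [RHS]mxE; apply: eq_bigr => l0 _.
by rewrite covZl covBl covZl cov_onel mulr0 subr0; congr (_ * _); rewrite /varm /covm mxE.
Qed.

Lemma adj_orth1 i : pe (Y i - adj_exp B W Y i) one = 0.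
Proof. by rewrite -/(bl_prev B _) prevB adj_prev subrr. Qed.

Lemma adj_orthW i j : pe (Y i - adj_exp B W Y i) (W j) = 0.
Proof. by rewrite peE covBl adj_cov subrr prevB adj_prev subrr mul0r addr0. Qed.

Lemma adj_orth i x : inspan W x -> pe (Y i - adj_exp B W Y i) x = 0.
Proof.
move=> [c0 [c ->]]; rewrite peDr peZr adj_orth1 mulr0 add0r pe_sumr big1 // => j _.
by rewrite peZr adj_orthW mulr0.
Qed.

Lemma inspan_adj i : inspan W (adj_exp B W Y i).
Proof.
exists (prev (Y i) - \sum_j (C *m N) i j * prev (W j)); exists (fun j => (C *m N) i j).
rewrite /adj_exp scalerBl -addrA; congr (_ + _).
under eq_bigr do rewrite scalerBr scalerA.
rewrite sumrB scaler_suml addrC.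
done.
Qed.
End Adj.
Arguments adj_orth {k l W Y i x}.

Lemma inspanB l (W : 'I_l -> V) x y : inspan W x -> inspan W y -> inspan W (x - y).
Proof.
move=> [a [c ->]] [b [d ->]]; exists (a - b); exists (fun j => c j - d j).
rewrite scalerBl [X in _ = _ + X](eq_bigr (fun j => c j *: W j - d j *: W j)); last by move=> j _ /=; rewrite scalerBl.
by rewrite sumrB opprD addrACA.
Qed.

Lemma inspanW l (W : 'I_l -> V) j : inspan W (W j).
Proof.
exists 0; exists (fun i => (i == j)%:R); rewrite scale0r add0r (bigD1 j) //= eqxx scale1r.
by rewrite big1 ?addr0 // => i /negbTE ->; rewrite scale0r.
Qed.

Lemma adj_opt k l (W : 'I_l -> V) (Y : 'I_k -> V) i x : inspan W x ->
  pe (Y i - adj_exp B W Y i) (Y i - adj_exp B W Y i) <= pe (Y i - x) (Y i - x).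
Proof.
move=> hx.
have hd : inspan W (adj_exp B W Y i - x) by apply: inspanB => //; exact: inspan_adj.
have -> : Y i - x = (Y i - adj_exp B W Y i) + (adj_exp B W Y i - x) by rewrite addrA subrK.
have ed := adj_orth hd.
rewrite (peDl (Y i - adj_exp B W Y i) (adj_exp B W Y i - x)) !(peDr (Y i - adj_exp B W Y i)).
rewrite ed (pe_sym B (adj_exp B W Y i - x)) ed addr0 add0r.
by rewrite lerDl pe_ge0.
Qed.

Lemma adj_lin k l p (W : 'I_l -> V) (Y : 'I_k -> V) (U X : 'I_p -> V) (A : 'M[R]_(p, k)) :
  (forall a j, cov (U a) (W j) = 0) ->
  (forall a, X a = \sum_k0 A a k0 *: Y k0 + U a) ->
  forall a, adj_exp B W X a = \sum_k0 A a k0 *: adj_exp B W Y k0 + prev (U a) *: one.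
Proof.
move=> hU hX a.
have hC : covm B X W = A *m covm B Y W.
  apply/matrixP => i j; rewrite !mxE hX covDl hU addr0 cov_suml.
  by apply: eq_bigr => k0 _; rewrite covZl mxE.
rewrite /adj_exp hC -mulmxA hX prevD prev_sum.
rewrite scalerDl -addrA [prev (U a) *: one + _]addrC addrA; congr (_ + _).
under [in RHS]eq_bigr do rewrite scalerDr.
rewrite big_split /=; congr (_ + _).
  by rewrite scaler_suml; apply: eq_bigr => k0 _; rewrite prevZ scalerA.
under eq_bigr do rewrite mxE scaler_suml.
rewrite exchange_big /=; apply: eq_bigr => k0 _; rewrite scaler_sumr.
by apply: eq_bigr => j _; rewrite scalerA.
Qed.

Lemma pe_sum_le n (f : 'I_n -> V) :
  pe (\sum_i f i) (\sum_i f i) <= n%:R * \sum_i pe (f i) (f i).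
Proof.
have h2 x y : 2 * pe x y <= pe x x + pe y y.
  have := pe_ge0 B (x - y); rewrite peBl !peBr (pe_sym B y x) => h; lra.
rewrite pe_suml; under eq_bigr do rewrite pe_sumr.
have -> : forall a b : R, (a <= b) = (2 * a <= 2 * b) by move=> a b; rewrite ler_pM2l.
rewrite mulr_sumr.
apply: (@le_trans _ _ (\sum_i \sum_j (pe (f i) (f i) + pe (f j) (f j)))).
  apply: ler_sum => i _; rewrite mulr_sumr; apply: ler_sum => j _; exact: h2.
rewrite (eq_bigr (fun i => n%:R * pe (f i) (f i) + \sum_j pe (f j) (f j))); last first.
  by move=> i _; rewrite big_split /= sumr_const card_ord mulr_natl.
rewrite big_split /= -mulr_sumr sumr_const card_ord -mulr_natl.
rewrite mulr1 -mulr_natl le_eqVlt; apply/orP; left; apply/eqP; ring.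
Qed.

End BL.

(* Components of the stacked vector mu = vec(mu_1,...,mu_m) are indexed by
   'I_D; component k belongs to group g k.  Res j k is component k of the
   residual R_{g k, j} (j-th residual of group g k, j = 0,1,2,...). *)
Theorem lemma3p2 (R : realType) (V : lmodType R) (B : belief V)
  (m D p : nat) (g : 'I_D -> 'I_m)
  (mu : 'I_D -> V) (Res : nat -> 'I_D -> V)
  (A : 'M[R]_(p, D)) (U X : 'I_p -> V) :
  (forall j k, bl_prev B (Res j k) = 0) ->
  (forall j k k', bl_cov B (Res j k) (mu k') = 0) ->
  (forall j j' k k', (j, g k) != (j', g k') -> bl_cov B (Res j k) (Res j' k') = 0) ->
  (forall j k k', g k = g k' -> bl_cov B (Res j k) (Res j k') = bl_cov B (Res 0 k) (Res 0 k')) ->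
  (forall a k, bl_cov B (U a) (mu k) = 0) ->
  (forall a j k, bl_cov B (U a) (Res j k) = 0) ->
  (forall a, X a = \sum_(k < D) A a k *: mu k + U a) ->
  forall eps : R, 0 < eps -> exists N : nat, forall n : 'I_m -> nat,
    (forall i, (N <= n i)%N) ->
    let Z := fun (j : nat) (k : 'I_D) => mu k + Res j k in
    let Zbar := fun k => (n (g k))%:R^-1 *: \sum_(j < n (g k)) Z j k in
    let calZ := adj_exp B Zbar mu in
    bl_norm B (fun a => adj_exp B calZ X a
                        - (\sum_(k < D) A a k *: mu k + bl_prev B (U a) *: bl_one B)) < eps.

Proof.
move=> hR0 hRmu hRR hRvar hUmu hUR hX eps eps0.
pose S := fun k => bl_cov B (Res 0%N k) (Res 0%N k).
have S0 : forall k, 0 <= S k by move=> k; exact: cov_ge0.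
pose C := D%:R * \sum_(a < p) \sum_(k < D) A a k ^+ 2 * S k.
have C0 : 0 <= C.
  apply: mulr_ge0 => //; apply: sumr_ge0 => a _; apply: sumr_ge0 => k _.
  by apply: mulr_ge0 => //; exact: sqr_ge0.
pose Nn := (Num.trunc (C / eps ^+ 2)).+1.
exists Nn => n hn; cbv zeta.
set Zbar := fun k : 'I_D => _.
set calZ := adj_exp B Zbar mu.
have Nn0 : 0 < Nn%:R :> R by rewrite ltr0n.
have hnk : forall k, (0 < n (g k))%N by move=> k; exact: leq_trans (hn (g k)).
have stepA : forall k, pe B (mu k - Zbar k) (mu k - Zbar k) = S k / (n (g k))%:R.
  move=> k.
  have nz : (n (g k))%:R != 0 :> R by rewrite pnatr_eq0 -lt0n hnk.
  have -> : mu k - Zbar k = - ((n (g k))%:R^-1 *: \sum_(j < n (g k)) Res j k).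
    rewrite /Zbar big_split /= sumr_const card_ord scalerDr -scaler_nat scalerA mulVf //.
    by rewrite scale1r opprD addrA subrr add0r.
  rewrite peNl peNr opprK peZl peZr pe_suml.
  have hjj : forall j j' : 'I_(n (g k)), pe B (Res j k) (Res j' k) = if j == j' then S k else 0.
    move=> j j'; rewrite peE !hR0 mulr0 addr0.
    case: eqVneq => [<-|ne]; first exact: hRvar.
    apply: hRR; rewrite xpair_eqE eqxx andbT; exact: ne.
  have -> : \sum_(j < n (g k)) pe B (Res j k) (\sum_(j0 < n (g k)) Res j0 k) = (n (g k))%:R * S k.
    rewrite (eq_bigr (fun _ => S k)) ?sumr_const ?card_ord ?mulr_natl //.
    move=> j _; rewrite pe_sumr (bigD1 j) //= hjj eqxx big1 ?addr0 // => j' ne.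
    by rewrite hjj eq_sym (negbTE ne).
  by field.
have stepC : forall k, pe B (mu k - adj_exp B calZ mu k) (mu k - adj_exp B calZ mu k) <= S k / Nn%:R.
  move=> k.
  apply: le_trans (@adj_opt _ _ B _ _ calZ mu k _ (inspanW B _ calZ k)) _.
  apply: le_trans (@adj_opt _ _ B _ _ Zbar mu k _ (inspanW B _ Zbar k)) _.
  rewrite stepA; apply: ler_wpM2l => //.
  by rewrite lef_pV2 ?posrE ?ltr0n ?hnk // ler_nat.
have hUcalZ : forall a j, bl_cov B (U a) (calZ j) = 0.
  move=> a j; have [c0 [c hc]] := inspan_adj B _ _ Zbar mu j; rewrite /calZ hc.
  rewrite covDr covZr cov_oner mulr0 add0r cov_sumr big1 // => k _.
  rewrite covZr /Zbar covZr cov_sumr big1 ?mulr0 ?mulr0 // => j' _.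
  by rewrite covDr hUmu hUR addr0.
have hE : forall a, adj_exp B calZ X a - (\sum_(k < D) A a k *: mu k + bl_prev B (U a) *: bl_one B)
    = \sum_(k < D) A a k *: (adj_exp B calZ mu k - mu k).
  move=> a; rewrite (adj_lin B _ _ _ _ _ _ _ _ hUcalZ hX a) opprD addrACA subrr addr0 -sumrB.
  by apply: eq_bigr => k _; rewrite scalerBr.
have hsum : \sum_(a < p) pe B (adj_exp B calZ X a - (\sum_(k < D) A a k *: mu k + bl_prev B (U a) *: bl_one B))
    (adj_exp B calZ X a - (\sum_(k < D) A a k *: mu k + bl_prev B (U a) *: bl_one B)) <= C / Nn%:R.
  rewrite /C -mulrA mulr_suml mulr_sumr; apply: ler_sum => a _.
  rewrite hE; apply: le_trans (pe_sum_le B _ _) _.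
  apply: ler_wpM2l => //; rewrite mulr_suml; apply: ler_sum => k _.
  rewrite peZl peZr mulrA -expr2 -mulrA; apply: ler_wpM2l; first exact: sqr_ge0.
  by rewrite -opprB peNl peNr opprK; exact: stepC.
have hlt : C / Nn%:R < eps ^+ 2.
  rewrite ltr_pdivrMr // mulrC -ltr_pdivrMr ?exprn_gt0 //.
  exact: truncnS_gt.
rewrite /bl_norm.
rewrite -(gtr0_norm eps0) -sqrtr_sqr ltr_sqrt ?exprn_gt0 //.
exact: le_lt_trans hsum hlt.
Qed.
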